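(* Let $L=E[C_1,\dots,C_n]$ be a congruence uniform lattice, i.e. each $C_i$ is an interval of $E[C_1,\dots,C_{i-1}]$. Then $L$ is left modular if and only if, for every $i\in[n]$, $C_i$ contains an element of the spine of $E[C_1,\dots,C_{i-1}]$.
   Context: All lattices are finite. For a convex subset $C$ of a lattice $L$, let $I_L(C)=\{y\in L\mid\exists x\in C,\ y\le x\}$, and the doubling $L[C]$ is the subposet of $L\times\{0<1\}$ on $\big(I_L(C)\times\{0\}\big)\sqcup\big(((L\setminus I_L(C))\cup C)\times\{1\}\big)$. $E[\,]$ is the one-element lattice and $E[C_1,\dots,C_{i+1}]:=E[C_1,\dots,C_i][C_{i+1}]$ with $C_{i+1}$ a nonempty interval of $E[C_1,\dots,C_i]$. The spine of a poset is the set of elements lying on some chain of maximum length. An element $a$ is left modular if for all $b<c$, $(b\vee a)\wedge c=b\vee(a\wedge c)$; a lattice is left modular if it has a maximal chain consisting of left modular elements. *)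

(* Defs.v *)
(* E[C_1,...,C_i] is realised as a subset of {0,1}^n (functions 'I_n -> bool),
   ordered componentwise: the doubling L[C] is by definition a subposet of
   L x {0<1}, so E[C_1..C_i] is a subposet of {0<1}^i; we pad the unused
   coordinates i..n-1 with false.  Coordinate i (0-based) records the i-th
   doubling (doubling by the paper's C_{i+1}). *)
From HB Require Import structures.
From mathcomp Require Import all_boot all_order.
Set Implicit Arguments. Unset Strict Implicit. Unset Printing Implicit Defensive.

Section Doubling.
Variable n : nat.
Definition pt := {ffun 'I_n -> bool}.

Definition ple (x y : pt) : bool := [forall k, x k ==> y k].
Definition plt (x y : pt) : bool := (x != y) && ple x y.

Definition getc (z : pt) (i : nat) : bool := [exists k, (val k == i) && z k].
Definition setc (z : pt) (i : nat) (b : bool) : pt :=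
  [ffun k => if val k == i then b else z k].

Definition bot_pt : pt := [ffun => false].

Definition downset (L C : {set pt}) : {set pt} :=
  [set y in L | [exists x in C, ple y x]].

Definition double (L C : {set pt}) (i : nat) : {set pt} :=
  [set z | ((~~ getc z i) && (setc z i false \in downset L C))
        || (getc z i && (setc z i false \in (L :\: downset L C) :|: C))].

(* E[C_0, ..., C_(i-1)] (0-based indices) *)
Fixpoint Elat (C : nat -> {set pt}) (i : nat) : {set pt} :=
  match i with
  | 0 => [set bot_pt]
  | j.+1 => double (Elat C j) (C j) j
  end.

Definition is_interval (L C : {set pt}) : Prop :=
  exists a b, [/\ a \in L, b \in L, ple a b &
                  C = [set x in L | ple a x && ple x b]].

Definition chain (P S : {set pt}) : bool :=
  (S \subset P) && [forall x in S, forall y in S, ple x y || ple y x].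
Definition max_chain (P S : {set pt}) : Prop :=
  chain P S /\ forall S', chain P S' -> S \subset S' -> S' = S.
Definition spine (P : {set pt}) : {set pt} :=
  [set x in P | [exists S : {set pt},
     [&& chain P S, x \in S & [forall S' : {set pt}, chain P S' ==> (#|S'| <= #|S|)]]]].

Definition is_lub (P : {set pt}) (x y z : pt) : bool :=
  [&& z \in P, ple x z, ple y z & [forall w in P, ple x w ==> ple y w ==> ple z w]].
Definition is_glb (P : {set pt}) (x y z : pt) : bool :=
  [&& z \in P, ple z x, ple z y & [forall w in P, ple w x ==> ple w y ==> ple w z]].
Definition pjoin (P : {set pt}) (x y : pt) : pt := odflt x [pick z | is_lub P x y z].
Definition pmeet (P : {set pt}) (x y : pt) : pt := odflt x [pick z | is_glb P x y z].

Definition left_modular_elt (P : {set pt}) (a : pt) : Prop :=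
  forall b c, b \in P -> c \in P -> plt b c ->
    pmeet P (pjoin P b a) c = pjoin P b (pmeet P a c).

Definition left_modular (P : {set pt}) : Prop :=
  exists S, max_chain P S /\ forall a, a \in S -> left_modular_elt P a.

End Doubling.

(* Main.v *)
Require Import Defs.
From HB Require Import structures.
From mathcomp Require Import all_boot all_order.
From Stdlib Require Import Classical.
Set Implicit Arguments. Unset Strict Implicit. Unset Printing Implicit Defensive.

Section Basic.
Variable n : nat.
Implicit Types (x y z w : pt n) (P S : {set pt n}).

Lemma ple_refl x : ple x x.
Proof. by apply/forallP=> k; apply/implyP. Qed.

Lemma ple_trans y x z : ple x y -> ple y z -> ple x z.
Proof.
move=> /forallP h1 /forallP h2; apply/forallP=> k; apply/implyP=> hx.
by move/implyP: (h2 k); apply; move/implyP: (h1 k); apply.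
Qed.

Lemma ple_anti x y : ple x y -> ple y x -> x = y.
Proof.
move=> /forallP h1 /forallP h2; apply/ffunP=> k.
move: (h1 k) (h2 k); case: (x k); case: (y k) => //=.
Qed.

Lemma plt_neq x y : plt x y -> x != y.
Proof. by case/andP. Qed.
Lemma plt_le x y : plt x y -> ple x y.
Proof. by case/andP. Qed.

Definition lat P := forall x y, x \in P -> y \in P ->
  (exists z, is_lub P x y z) /\ (exists z, is_glb P x y z).

Lemma lub_uniq P x y z z' : is_lub P x y z -> is_lub P x y z' -> z = z'.
Proof.
case/and4P=> zP xz yz /forall_inP hz; case/and4P=> zP' xz' yz' /forall_inP hz'.
apply: ple_anti.
  by move/implyP: (hz z' zP') => /(_ xz') /implyP /(_ yz').
by move/implyP: (hz' z zP) => /(_ xz) /implyP /(_ yz).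
Qed.

Lemma glb_uniq P x y z z' : is_glb P x y z -> is_glb P x y z' -> z = z'.
Proof.
case/and4P=> zP xz yz /forall_inP hz; case/and4P=> zP' xz' yz' /forall_inP hz'.
apply: ple_anti.
  by move/implyP: (hz' z zP) => /(_ xz) /implyP /(_ yz).
by move/implyP: (hz z' zP') => /(_ xz') /implyP /(_ yz').
Qed.

Section Lat.
Variable P : {set pt n}.
Hypothesis hP : lat P.

Lemma pjoinP x y : x \in P -> y \in P -> is_lub P x y (pjoin P x y).
Proof.
move=> xP yP; rewrite /pjoin; case: pickP => [z //|h].
by case: (hP xP yP) => [[z hz] _]; move: (h z); rewrite hz.
Qed.

Lemma pmeetP x y : x \in P -> y \in P -> is_glb P x y (pmeet P x y).
Proof.
move=> xP yP; rewrite /pmeet; case: pickP => [z //|h].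
by case: (hP xP yP) => [_ [z hz]]; move: (h z); rewrite hz.
Qed.

Lemma pjoin_eq x y z : x \in P -> y \in P -> is_lub P x y z -> pjoin P x y = z.
Proof. by move=> xP yP; apply: lub_uniq; apply: pjoinP. Qed.
Lemma pmeet_eq x y z : x \in P -> y \in P -> is_glb P x y z -> pmeet P x y = z.
Proof. by move=> xP yP; apply: glb_uniq; apply: pmeetP. Qed.

Lemma pjoin_in x y : x \in P -> y \in P -> pjoin P x y \in P.
Proof. by move=> xP yP; case/and4P: (pjoinP xP yP). Qed.
Lemma pmeet_in x y : x \in P -> y \in P -> pmeet P x y \in P.
Proof. by move=> xP yP; case/and4P: (pmeetP xP yP). Qed.
Lemma pjoin_l x y : x \in P -> y \in P -> ple x (pjoin P x y).
Proof. by move=> xP yP; case/and4P: (pjoinP xP yP). Qed.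
Lemma pjoin_r x y : x \in P -> y \in P -> ple y (pjoin P x y).
Proof. by move=> xP yP; case/and4P: (pjoinP xP yP). Qed.
Lemma pmeet_l x y : x \in P -> y \in P -> ple (pmeet P x y) x.
Proof. by move=> xP yP; case/and4P: (pmeetP xP yP). Qed.
Lemma pmeet_r x y : x \in P -> y \in P -> ple (pmeet P x y) y.
Proof. by move=> xP yP; case/and4P: (pmeetP xP yP). Qed.
Lemma pjoin_least x y w : x \in P -> y \in P -> w \in P ->
  ple x w -> ple y w -> ple (pjoin P x y) w.
Proof.
move=> xP yP wP xw yw; case/and4P: (pjoinP xP yP) => _ _ _ /forall_inP h.
by move/implyP: (h w wP) => /(_ xw) /implyP /(_ yw).
Qed.
Lemma pmeet_great x y w : x \in P -> y \in P -> w \in P ->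
  ple w x -> ple w y -> ple w (pmeet P x y).
Proof.
move=> xP yP wP xw yw; case/and4P: (pmeetP xP yP) => _ _ _ /forall_inP h.
by move/implyP: (h w wP) => /(_ xw) /implyP /(_ yw).
Qed.

Lemma pjoin_idl x y : x \in P -> y \in P -> ple x y -> pjoin P x y = y.
Proof.
move=> xP yP xy; apply: ple_anti; first exact: pjoin_least (ple_refl _).
exact: pjoin_r.
Qed.
Lemma pjoin_idr x y : x \in P -> y \in P -> ple y x -> pjoin P x y = x.
Proof.
move=> xP yP xy; apply: ple_anti; first exact: pjoin_least (ple_refl _) _.
exact: pjoin_l.
Qed.
Lemma pmeet_idl x y : x \in P -> y \in P -> ple x y -> pmeet P x y = x.
Proof.
move=> xP yP xy; apply: ple_anti; first exact: pmeet_l.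
exact: pmeet_great (ple_refl _) _.
Qed.
Lemma pmeet_idr x y : x \in P -> y \in P -> ple y x -> pmeet P x y = y.
Proof.
move=> xP yP xy; apply: ple_anti; first exact: pmeet_r.
exact: pmeet_great _ (ple_refl _).
Qed.

Lemma pmeet_sub x y z : x \in P -> y \in P -> z \in P -> ple y z ->
  pmeet P (pmeet P x z) y = pmeet P x y.
Proof.
move=> xP yP zP yz; have xzP := pmeet_in xP zP.
apply: ple_anti.
  apply: pmeet_great => //; first exact: pmeet_in.
    exact: ple_trans (pmeet_l _ _) (pmeet_l _ _).
  exact: pmeet_r.
apply: pmeet_great => //; first exact: pmeet_in.
  apply: pmeet_great => //; first exact: pmeet_in.
    exact: pmeet_l.
  exact: ple_trans (pmeet_r _ _) yz.
exact: pmeet_r.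
Qed.

End Lat.
End Basic.


Section Chains.
Variable n : nat.
Implicit Types (x y z w : pt n) (P S A : {set pt n}).

Lemma exists_min A : A != set0 -> exists2 x, x \in A & forall w, w \in A -> ple w x -> w = x.
Proof.
case/set0Pn=> x0 x0A.
pose F x := #|[set w in A | ple w x]|.
case: (@arg_minnP _ x0 (mem A) F x0A) => x xA hx.
have {}xA : x \in A := xA.
exists x => // w wA wx; apply/eqP/negPn/negP => nwx.
have := hx w (wA : mem A w); rewrite leqNgt => /negP; apply.
apply: proper_card; apply/properP; split.
  apply/subsetP=> v; rewrite !inE => /andP[-> vw] /=; exact: ple_trans vw wx.
exists x; first by rewrite inE xA ple_refl.
rewrite inE xA /=; apply/negP=> xw; move/eqP: nwx; apply; exact: ple_anti.
Qed.

Lemma exists_max A : A != set0 -> exists2 x, x \in A & forall w, w \in A -> ple x w -> w = x.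
Proof.
case/set0Pn=> x0 x0A.
pose F x := #|[set w in A | ple x w]|.
case: (@arg_minnP _ x0 (mem A) F x0A) => x xA hx.
have {}xA : x \in A := xA.
exists x => // w wA wx; apply/eqP/negPn/negP => nwx.
have := hx w (wA : mem A w); rewrite leqNgt => /negP; apply.
apply: proper_card; apply/properP; split.
  apply/subsetP=> v; rewrite !inE => /andP[-> vw] /=; exact: ple_trans wx vw.
exists x; rewrite !inE xA /=; first by rewrite ple_refl.
apply/negP=> xw; move/eqP: nwx; apply; exact: ple_anti.
Qed.

Lemma chain_sub P S : chain P S -> S \subset P.
Proof. by case/andP. Qed.
Lemma chain_cmp P S x y : chain P S -> x \in S -> y \in S -> ple x y || ple y x.
Proof. by case/andP=> _ /forall_inP h xS yS; move/forall_inP: (h x xS); apply. Qed.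

Lemma chainP P S : S \subset P -> (forall x y, x \in S -> y \in S -> ple x y || ple y x) ->
  chain P S.
Proof.
move=> sub h; apply/andP; split => //.
by apply/forall_inP=> x xS; apply/forall_inP=> y yS; apply: h.
Qed.

Lemma maxchain_add P S u : max_chain P S -> u \in P ->
  (forall w, w \in S -> ple w u || ple u w) -> u \in S.
Proof.
case=> hS hmax uP hu.
have: chain P (u |: S).
  apply: chainP.
    by apply/subsetP=> v; rewrite !inE => /orP[/eqP->//|] => vS; exact: (subsetP (chain_sub hS)).
  move=> x y; rewrite !inE => /orP[/eqP->|xS] /orP[/eqP->|yS].
  - by rewrite ple_refl.
  - by rewrite orbC hu.
  - by rewrite hu.
  - exact: chain_cmp hS xS yS.
move/hmax => /(_ (subsetUr _ _)) <-; by rewrite setU11.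
Qed.

Lemma chain_min P S A : chain P S -> A \subset S -> A != set0 ->
  exists2 x, x \in A & forall w, w \in A -> ple x w.
Proof.
move=> hS AS /exists_min [x xA hx]; exists x => // w wA.
case/orP: (chain_cmp hS (subsetP AS x xA) (subsetP AS w wA)) => // wx.
by rewrite (hx w wA wx) ple_refl.
Qed.

Lemma chain_max P S A : chain P S -> A \subset S -> A != set0 ->
  exists2 x, x \in A & forall w, w \in A -> ple w x.
Proof.
move=> hS AS /exists_max [x xA hx]; exists x => // w wA.
case/orP: (chain_cmp hS (subsetP AS x xA) (subsetP AS w wA)) => // wx.
by rewrite (hx w wA wx) ple_refl.
Qed.

Section K3.
Variable P : {set pt n}.
Hypothesis hP : lat P.
Variables (bot top : pt n).
Hypotheses (botP : bot \in P) (topP : top \in P).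
Hypotheses (hbot : forall z, z \in P -> ple bot z) (htop : forall z, z \in P -> ple z top).
Variable m : {set pt n}.
Hypothesis hm : max_chain P m.
Hypothesis hlm : forall x, x \in m -> left_modular_elt P x.

Let mP : m \subset P. Proof. by case: hm => /chain_sub. Qed.
Let mc : chain P m. Proof. by case: hm. Qed.

Lemma bot_in_m : bot \in m.
Proof. apply: (maxchain_add hm) => // w wm; by rewrite (hbot (subsetP mP w wm)) orbT. Qed.
Lemma top_in_m : top \in m.
Proof. by apply: (maxchain_add hm) => // w wm; rewrite (htop (subsetP mP w wm)). Qed.

Definition phi y := [set pmeet P x y | x in m].

Lemma phi_lt y z : y \in P -> z \in P -> plt y z -> #|phi y| < #|phi z|.
Proof.
move=> yP zP /andP[nyz yz].
have inm x : x \in m -> x \in P by move=> /(subsetP mP).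
have eqphi : phi y = (fun w => pmeet P w y) @: phi z.
  rewrite /phi -imset_comp; apply: eq_in_imset => x xm /=.
  by rewrite pmeet_sub // inm.
pose M := [set x in m | ple z (pjoin P y x)].
have topM : top \in M by rewrite inE top_in_m /= (ple_trans (htop zP)) // pjoin_r.
have Mm : M \subset m by apply/subsetP=> x; rewrite inE => /andP[].
have [x xM hx] : exists2 x, x \in M & forall w, w \in M -> ple x w.
  by apply: (chain_min mc Mm); apply/set0Pn; exists top.
move: xM; rewrite inE => /andP[xm zx].
have xP := inm _ xm.
have xnb : x != bot.
  apply/eqP=> xb; move: zx; rewrite xb pjoin_idr // ?hbot // => zy.
  by move: nyz; rewrite (ple_anti yz zy) eqxx.
pose D := [set w in m | plt w x].
have botD : bot \in D by rewrite inE bot_in_m /plt eq_sym xnb hbot.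
have Dm : D \subset m by apply/subsetP=> w; rewrite inE => /andP[].
have [x' x'D hx'] : exists2 x', x' \in D & forall w, w \in D -> ple w x'.
  by apply: (chain_max mc Dm); apply/set0Pn; exists bot.
move: x'D; rewrite inE => /andP[x'm /andP[nx'x x'x]].
have x'P := inm _ x'm.
have pred w : w \in m -> ple w x' || ple x w.
  move=> wm; case/orP: (chain_cmp mc wm xm) => wx; last by rewrite wx orbT.
  case: (eqVneq w x) => [->|nwx]; first by rewrite ple_refl orbT.
  by rewrite hx' // inE wm /plt nwx.
have notM : ~~ ple z (pjoin P y x').
  apply/negP=> zx'; have : x' \in M by rewrite inE x'm.
  move/hx => xx'; move: nx'x; by rewrite (ple_anti x'x xx') eqxx.
have lmx := hlm xm yP zP (introT andP (conj nyz yz)).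
have lmx' := hlm x'm yP zP (introT andP (conj nyz yz)).
have zj : pmeet P (pjoin P y x) z = z by rewrite pmeet_idr // pjoin_in.
have i1 : pmeet P x' z != pmeet P x z.
  apply/eqP=> e; move: lmx'; rewrite e -lmx zj => e2.
  move: notM; rewrite -e2 pmeet_l //; exact: pjoin_in.
have i2 : pmeet P x' y = pmeet P x y.
  set t := pmeet P x y.
  have tP : t \in P by exact: pmeet_in.
  set u := pjoin P x' t.
  have uP : u \in P by exact: pjoin_in.
  have ux : ple u x by apply: pjoin_least => //; exact: pmeet_l.
  have um : u \in m.
    apply: (maxchain_add hm) => // w wm; case/orP: (pred w wm) => h.
      by rewrite (ple_trans h) // pjoin_l.
    by rewrite (ple_trans ux h) orbT.
  case/orP: (pred u um) => h.
    apply: ple_anti.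
      apply: pmeet_great => //; [exact: pmeet_in | exact: ple_trans (pmeet_l hP x'P yP) x'x | exact: pmeet_r].
    apply: pmeet_great => //.
      exact: ple_trans (pjoin_r hP x'P tP) h.
    exact: pmeet_r.
  exfalso; move/negP: notM; apply.
  have yj : y \in P by [].
  apply: (ple_trans zx); apply: pjoin_least => //; first exact: pjoin_in.
    exact: pjoin_l.
  apply: (ple_trans h); apply: pjoin_least => //; first exact: pjoin_in.
    exact: pjoin_r.
  exact: ple_trans (pmeet_r hP xP yP) (pjoin_l hP yP x'P).
have w1in : pmeet P x' z \in phi z by apply/imsetP; exists x'.
have w2in : pmeet P x z \in phi z by apply/imsetP; exists x.
rewrite eqphi ltn_neqAle leq_imset_card andbT.
apply/negP => /imset_injP inj.
move/eqP: i1; apply; apply: inj => //=.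
by rewrite !pmeet_sub // ?i2.
Qed.

Lemma phi_card y : 0 < #|phi y| <= #|m|.
Proof.
rewrite leq_imset_card andbT card_gt0; apply/set0Pn.
by exists (pmeet P bot y); apply/imsetP; exists bot => //; exact: bot_in_m.
Qed.

Lemma K3 S : chain P S -> #|S| <= #|m|.
Proof.
move=> hS; rewrite cardE.
have -> : #|m| = size (iota 1 #|m|) by rewrite size_iota.
rewrite -(size_map (fun y => #|phi y|)).
apply: uniq_leq_size.
  rewrite map_inj_in_uniq ?enum_uniq // => y1 y2; rewrite !mem_enum => y1S y2S e.
  apply/eqP/negPn/negP=> ne.
  have y1P := subsetP (chain_sub hS) _ y1S; have y2P := subsetP (chain_sub hS) _ y2S.
  case/orP: (chain_cmp hS y1S y2S) => h.
    by move: (phi_lt y1P y2P (introT andP (conj ne h))); rewrite e ltnn.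
  have ne' : y2 != y1 by rewrite eq_sym.
  by move: (phi_lt y2P y1P (introT andP (conj ne' h))); rewrite e ltnn.
move=> k /mapP[y _ ->]; rewrite mem_iota.
by case/andP: (phi_card y) => -> /= h; rewrite add1n ltnS.
Qed.

End K3.
End Chains.


Section Enc.
Variable n : nat.
Variable i : nat.
Hypothesis Hi : i < n.
Implicit Types (x y z w : pt n) (P S A : {set pt n}).

Let oi : 'I_n := Ordinal Hi.

Lemma getcE z : getc z i = z oi.
Proof.
apply/existsP/idP => [[k /andP[/eqP ki zk]]|zo].
  by have -> : oi = k by apply: val_inj.
by exists oi; rewrite eqxx.
Qed.

Lemma setcE z b k : setc z i b k = if k == oi then b else z k.
Proof.
rewrite /setc ffunE; congr (if _ then _ else _).
Qed.

Definition mk x e := setc x i e.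
Definition pr z := setc z i false.

Lemma getc_mk x e : getc (mk x e) i = e.
Proof. by rewrite getcE setcE eqxx. Qed.

Lemma pr_mk x e : pr (mk x e) = pr x.
Proof. by apply/ffunP=> k; rewrite !setcE; case: eqP. Qed.

Lemma mk_pr z : mk (pr z) (getc z i) = z.
Proof. by apply/ffunP=> k; rewrite !setcE getcE; case: eqP => // ->. Qed.

Lemma pr_id x : getc x i = false -> pr x = x.
Proof. by rewrite getcE => h; apply/ffunP=> k; rewrite setcE; case: eqP => // ->. Qed.

Lemma getc_pr x : getc (pr x) i = false.
Proof. by rewrite getcE setcE eqxx. Qed.

Lemma mk_ple x y e f : ple (mk x e) (mk y f) = ple (pr x) (pr y) && (e ==> f).
Proof.
apply/forallP/andP => [h|[/forallP h1 h2] k].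
  split; last by move: (h oi); rewrite !setcE eqxx.
  by apply/forallP=> k; move: (h k); rewrite !setcE; case: eqP.
by move: (h1 k); rewrite !setcE; case: eqP.
Qed.

Lemma mk_inj x y e f : getc x i = false -> getc y i = false ->
  mk x e = mk y f -> x = y /\ e = f.
Proof.
move=> hx hy h; split.
  by rewrite -(pr_id hx) -(pr_id hy) -(pr_mk x e) h pr_mk.
by rewrite -(getc_mk x e) h getc_mk.
Qed.

Lemma getc_setc_other z j b : j != i -> getc (setc z i b) j = getc z j.
Proof.
move=> ji; apply: eq_existsb => k; rewrite setcE; case: (k =P oi) => // ->.
by rewrite /= eq_sym (negbTE ji).
Qed.

Section Dbl.
Variables (L : {set pt n}) (a b : pt n).
Hypotheses (aL : a \in L) (bL : b \in L) (ab : ple a b).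
Hypothesis hL : forall z, z \in L -> getc z i = false.
Let Ci := [set x in L | ple a x && ple x b].
Definition v1 x := ple x b ==> ple a x.
Let L' := Defs.double L Ci i.

Lemma v1_up x y : v1 x -> ple x y -> v1 y.
Proof.
move=> /implyP h xy; apply/implyP => yb.
exact: ple_trans (h (ple_trans xy yb)) xy.
Qed.

Lemma v1_ge x : ple a x -> v1 x.
Proof. by move=> h; apply/implyP. Qed.

Lemma downsetE : downset L Ci = [set y in L | ple y b].
Proof.
apply/setP=> y; rewrite !inE; case: (y \in L) => //=.
apply/existsP/idP => [[x /andP[]]|yb]; last by exists b; rewrite !inE bL ab ple_refl yb.
by rewrite !inE => /and3P[_ _ xb] yx; exact: ple_trans yx xb.
Qed.

Lemma in_double z : (z \in L') =
  (pr z \in L) && (if getc z i then v1 (pr z) else ple (pr z) b).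
Proof.
rewrite /L' /Defs.double inE downsetE !inE.
case: (getc z i) => /=; rewrite ?orbF //.
rewrite /v1; case: (pr z \in L) => //=.
by case: (ple (pr z) b) => //=; rewrite ?andbT ?orbF.
Qed.

Lemma in_double_mk x e : getc x i = false ->
  (mk x e \in L') = (x \in L) && (if e then v1 x else ple x b).
Proof. by move=> hx; rewrite in_double pr_mk getc_mk (pr_id hx). Qed.

Lemma double_inv z : z \in L' -> exists x e, [/\ z = mk x e, x \in L & if e then v1 x else ple x b].
Proof.
rewrite in_double => /andP[h1 h2]; exists (pr z), (getc z i); split => //.
by rewrite mk_pr.
Qed.

Lemma mk_ple' x y e f : getc x i = false -> getc y i = false ->
  ple (mk x e) (mk y f) = ple x y && (e ==> f).
Proof. by move=> hx hy; rewrite mk_ple (pr_id hx) (pr_id hy). Qed.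

Hypothesis latL : lat L.

Lemma dbl_lub x y e f : mk x e \in L' -> mk y f \in L' -> x \in L -> y \in L ->
  is_lub L' (mk x e) (mk y f) (mk (pjoin L x y) (e || f)).
Proof.
move=> xL' yL' xL yL.
have hx := hL xL; have hy := hL yL; have jL := pjoin_in latL xL yL; have hj := hL jL.
move: xL' yL'; rewrite !in_double_mk // xL yL /= => hxe hyf.
apply/and4P; split.
- rewrite in_double_mk // jL /=; case: e hxe => /= hxe.
    exact: v1_up hxe (pjoin_l latL xL yL).
  case: f hyf => /= hyf; first exact: v1_up hyf (pjoin_r latL xL yL).
  exact: pjoin_least.
- by rewrite mk_ple' // pjoin_l //=; apply/implyP=> ->.
- by rewrite mk_ple' // pjoin_r //=; apply/implyP=> ->; rewrite orbT.
apply/forall_inP=> w /double_inv [w0 [g [-> w0L _]]].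
have hw := hL w0L.
rewrite !mk_ple' //; apply/implyP => /andP[xw eg]; apply/implyP => /andP[yw fg].
rewrite pjoin_least //=; move: eg fg; case: (e); case: (f) => //=.
Qed.

Lemma dbl_glb x y e f : mk x e \in L' -> mk y f \in L' -> x \in L -> y \in L ->
  is_glb L' (mk x e) (mk y f) (mk (pmeet L x y) [&& e, f & v1 (pmeet L x y)]).
Proof.
move=> xL' yL' xL yL.
have hx := hL xL; have hy := hL yL; have jL := pmeet_in latL xL yL; have hj := hL jL.
move: xL' yL'; rewrite !in_double_mk // xL yL /= => hxe hyf.
apply/and4P; split.
- rewrite in_double_mk // jL /=.
  case: e hxe => /= hxe; last exact: ple_trans (pmeet_l latL xL yL) hxe.
  case: f hyf => /= hyf; last exact: ple_trans (pmeet_r latL xL yL) hyf.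
  by rewrite /v1; case: (ple _ b); case: (ple a _).
- by rewrite mk_ple' // pmeet_l //=; apply/implyP => /and3P[].
- by rewrite mk_ple' // pmeet_r //=; apply/implyP => /and3P[].
apply/forall_inP=> w /double_inv [w0 [g [-> w0L hg]]].
have hw := hL w0L.
rewrite !mk_ple' //; apply/implyP => /andP[xw eg]; apply/implyP => /andP[yw fg].
rewrite pmeet_great //=; case: g eg fg hg => //= -> -> /= hg.
exact: v1_up hg (pmeet_great latL xL yL w0L xw yw).
Qed.

Lemma lat_double : lat L'.
Proof.
move=> u v uL' vL'.
case/double_inv: (uL') => x [e [ue xL _]]; case/double_inv: (vL') => y [f [ve yL _]].
subst u v; split; eexists; [exact: dbl_lub | exact: dbl_glb].
Qed.

Lemma pjoin_dbl x y e f : mk x e \in L' -> mk y f \in L' -> x \in L -> y \in L ->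
  pjoin L' (mk x e) (mk y f) = mk (pjoin L x y) (e || f).
Proof. by move=> h1 h2 h3 h4; apply: (pjoin_eq lat_double h1 h2); exact: dbl_lub. Qed.

Lemma pmeet_dbl x y e f : mk x e \in L' -> mk y f \in L' -> x \in L -> y \in L ->
  pmeet L' (mk x e) (mk y f) = mk (pmeet L x y) [&& e, f & v1 (pmeet L x y)].
Proof. by move=> h1 h2 h3 h4; apply: (pmeet_eq lat_double h1 h2); exact: dbl_glb. Qed.


Lemma mk_join_in x y e f : mk x e \in L' -> mk y f \in L' -> x \in L -> y \in L ->
  mk (pjoin L x y) (e || f) \in L'.
Proof. by move=> h1 h2 h3 h4; have := pjoin_in lat_double h1 h2; rewrite pjoin_dbl. Qed.

Lemma mk_meet_in x y e f : mk x e \in L' -> mk y f \in L' -> x \in L -> y \in L ->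
  mk (pmeet L x y) [&& e, f & v1 (pmeet L x y)] \in L'.
Proof. by move=> h1 h2 h3 h4; have := pmeet_in lat_double h1 h2; rewrite pmeet_dbl. Qed.

Lemma lm_le x p q : left_modular_elt L x -> x \in L -> p \in L -> q \in L -> ple p q ->
  pmeet L (pjoin L p x) q = pjoin L p (pmeet L x q).
Proof.
move=> hx xL pL qL pq; case: (eqVneq p q) => [<-|npq]; last first.
  by apply: hx => //; rewrite /plt npq.
by rewrite (pmeet_idr latL (pjoin_in latL pL xL) pL (pjoin_l latL pL xL)) (pjoin_idr latL pL (pmeet_in latL xL pL) (pmeet_r latL xL pL)).
Qed.

Lemma K2a x : x \in L -> ple x b -> left_modular_elt L x -> left_modular_elt L' (mk x false).
Proof.
move=> xL xb hx B Cc /double_inv [p [e [-> pL hpe]]] /double_inv [q [f [-> qL hqf]]].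
have hp := hL pL; have hq := hL qL; have hx0 := hL xL.
have BL : mk p e \in L' by rewrite in_double_mk // pL.
have CL : mk q f \in L' by rewrite in_double_mk // qL.
have XL : mk x false \in L' by rewrite in_double_mk // xL.
case/andP=> _; rewrite mk_ple' // => /andP[pq ef].
have jL := mk_join_in BL XL pL xL; have mL := mk_meet_in XL CL xL qL.
rewrite orbF in jL.
rewrite pjoin_dbl // orbF pmeet_dbl //; last exact: pjoin_in.
rewrite pmeet_dbl // /= pjoin_dbl //; last exact: pmeet_in.
rewrite orbF lm_le //; congr mk.
case: e ef hpe {BL jL} => /= [ef hp1|_ _]; last by [].
rewrite ef /=.
apply: v1_up hp1 _; apply: pjoin_l => //; exact: pmeet_in.
Qed.

Lemma K2b x : x \in L -> ple a x -> left_modular_elt L x -> left_modular_elt L' (mk x true).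
Proof.
move=> xL ax hx B Cc /double_inv [p [e [-> pL hpe]]] /double_inv [q [f [-> qL hqf]]].
have hp := hL pL; have hq := hL qL; have hx0 := hL xL.
have BL : mk p e \in L' by rewrite in_double_mk // pL.
have CL : mk q f \in L' by rewrite in_double_mk // qL.
have XL : mk x true \in L' by rewrite in_double_mk // xL /=; exact: v1_ge.
case/andP=> _; rewrite mk_ple' // => /andP[pq ef].
have jL := mk_join_in BL XL pL xL; have mL := mk_meet_in XL CL xL qL.
have xqL : pmeet L x q \in L by exact: pmeet_in.
rewrite orbT in jL.
rewrite pjoin_dbl // orbT pmeet_dbl //; last exact: pjoin_in.
rewrite pmeet_dbl // pjoin_dbl //.
rewrite lm_le //; congr mk; rewrite /=.
have vL : pjoin L p (pmeet L x q) \in L by exact: pjoin_in.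
case: e ef hpe {BL jL} => /= [ef hp1|_ hpb].
  rewrite ef /=.
  by apply: v1_up hp1 _; apply: pjoin_l.
case: f {CL mL hqf} => //=.
apply/idP/idP => h; last first.
  by apply: v1_up h _; apply: pjoin_r.
apply/implyP => xqb; apply: pmeet_great => //.
have vb : ple (pjoin L p (pmeet L x q)) b by apply: pjoin_least.
move/implyP: h => /(_ vb) av; apply: ple_trans av _.
by apply: pjoin_least => //; exact: pmeet_r.
Qed.

Lemma K1a x : x \in L -> ple x b -> left_modular_elt L' (mk x false) -> left_modular_elt L x.
Proof.
move=> xL xb hx p q pL qL /andP[npq pq].
have hp := hL pL; have hq := hL qL; have hx0 := hL xL.
have BL : mk p (~~ ple p b) \in L' by rewrite in_double_mk // pL /v1; case: (ple p b).
have CL : mk q (~~ ple q b) \in L' by rewrite in_double_mk // qL /v1; case: (ple q b).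
have XL : mk x false \in L' by rewrite in_double_mk // xL.
have : plt (mk p (~~ ple p b)) (mk q (~~ ple q b)).
  apply/andP; split.
    by apply/eqP => /(mk_inj hp hq) [e _]; move: npq; rewrite e eqxx.
  rewrite mk_ple' // pq /=; apply/implyP; apply: contra => qb; exact: ple_trans pq qb.
move/(hx _ _ BL CL).
have jL := mk_join_in BL XL pL xL; have mL := mk_meet_in XL CL xL qL.
rewrite pjoin_dbl // pmeet_dbl //; last exact: pjoin_in.
rewrite pmeet_dbl // /= pjoin_dbl //; last exact: pmeet_in.
move/mk_inj => [] //.
- by apply: hL; apply: pmeet_in => //; apply: pjoin_in.
- by apply: hL; apply: pjoin_in => //; apply: pmeet_in.
Qed.

Lemma K1b x : x \in L -> mk x true \in L' -> left_modular_elt L' (mk x true) -> left_modular_elt L x.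
Proof.
move=> xL XL hx p q pL qL /andP[npq pq].
have hp := hL pL; have hq := hL qL; have hx0 := hL xL.
have BL : mk p (v1 p) \in L' by rewrite in_double_mk // pL; rewrite /v1; case: (ple p b); case: (ple a p).
have CL : mk q (v1 q) \in L' by rewrite in_double_mk // qL; rewrite /v1; case: (ple q b); case: (ple a q).
have : plt (mk p (v1 p)) (mk q (v1 q)).
  apply/andP; split.
    by apply/eqP => /(mk_inj hp hq) [e _]; move: npq; rewrite e eqxx.
  rewrite mk_ple' // pq /=; apply/implyP => h; exact: v1_up h pq.
move/(hx _ _ BL CL).
have jL := mk_join_in BL XL pL xL; have mL := mk_meet_in XL CL xL qL.
rewrite pjoin_dbl // pmeet_dbl //; last exact: pjoin_in.
rewrite pmeet_dbl // pjoin_dbl //; last exact: pmeet_in.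
move/mk_inj => [] //.
- by apply: hL; apply: pmeet_in => //; apply: pjoin_in.
- by apply: hL; apply: pjoin_in => //; apply: pmeet_in.
Qed.

Lemma K1c x : x \in L -> mk x true \in L' -> left_modular_elt L' (mk x true) -> ple a x.
Proof.
move=> xL XL hx; apply/negPn/negP => nax.
have hb := hL bL; have hx0 := hL xL.
have B0 : mk b false \in L' by rewrite in_double_mk // bL ple_refl.
have B1 : mk b true \in L' by rewrite in_double_mk // bL /=; exact: v1_ge.
have : plt (mk b false) (mk b true).
  apply/andP; split; first by apply/eqP => /(mk_inj hb hb) [].
  by rewrite mk_ple' // ple_refl.
move/(hx _ _ B0 B1).
have jL := mk_join_in B0 XL bL xL; have mL := mk_meet_in XL B1 xL bL.
rewrite pjoin_dbl // pmeet_dbl //; last exact: pjoin_in.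
rewrite pmeet_dbl // pjoin_dbl //; last exact: pmeet_in.
have -> : v1 (pmeet L x b) = false.
  rewrite /v1 pmeet_r //=; apply/negbTE/negP => h; move/negP: nax; apply.
  exact: ple_trans h (pmeet_l latL xL bL).
move/(congr1 (fun z => getc z i)); rewrite !getc_mk /=.
by rewrite pmeet_idr //; [rewrite /v1 /= => /negP; apply; apply/implyP; rewrite ab | exact: pjoin_in | exact: pjoin_l].
Qed.

Lemma pr_in z : z \in L' -> pr z \in L.
Proof. by rewrite in_double => /andP[]. Qed.

Lemma pr_ple z w : ple z w -> ple (pr z) (pr w).
Proof. by rewrite -(mk_pr z) -(mk_pr w) mk_ple !pr_mk => /andP[]. Qed.

Lemma getc_ple z w : ple z w -> getc z i ==> getc w i.
Proof. by rewrite -(mk_pr z) -(mk_pr w) mk_ple !getc_mk => /andP[]. Qed.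

Lemma pr_chain S : chain L' S -> chain L (pr @: S).
Proof.
move=> hS; apply: chainP.
  apply/subsetP=> u /imsetP [z zS ->]; apply: pr_in; exact: (subsetP (chain_sub hS)).
move=> u v /imsetP [z zS ->] /imsetP [w wS ->].
by case/orP: (chain_cmp hS zS wS) => /pr_ple ->; rewrite ?orbT.
Qed.

Lemma pr_inj_lv z w : pr z = pr w -> getc z i = getc w i -> z = w.
Proof. by move=> h1 h2; rewrite -(mk_pr z) -(mk_pr w) h1 h2. Qed.

Lemma pr_card S : chain L' S -> #|S| <= (#|pr @: S|).+1.
Proof.
move=> hS.
pose S0 := [set z in S | ~~ getc z i]; pose S1 := [set z in S | getc z i].
have eS : S = S0 :|: S1.
  by apply/setP=> z; rewrite !inE; case: (z \in S); case: (getc z i).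
have c01 : #|S| = #|S0| + #|S1|.
  have e1 : S :&: [set z | getc z i] = S1 by apply/setP=> z; rewrite !inE.
  have e0 : S :\: [set z | getc z i] = S0 by apply/setP=> z; rewrite !inE andbC.
  by rewrite -(cardsID [set z | getc z i] S) e1 e0 addnC.
have i0 : #|pr @: S0| = #|S0|.
  apply: card_in_imset => z w; rewrite !inE => /andP[_ hz] /andP[_ hw] e.
  by apply: pr_inj_lv e _; move: hz hw; case: (getc z i); case: (getc w i).
have i1 : #|pr @: S1| = #|S1|.
  apply: card_in_imset => z w; rewrite !inE => /andP[_ hz] /andP[_ hw] e.
  by apply: pr_inj_lv e _; move: hz hw; case: (getc z i); case: (getc w i).
have le1 : #|pr @: S0 :&: pr @: S1| <= 1.
  apply/card_le1_eqP => u v; rewrite !inE => /andP[/imsetP[z0 z0S ->] /imsetP[z1 z1S e1]].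
  move=> /andP[/imsetP[w0 w0S ->] /imsetP[w1 w1S e2]].
  move: z0S z1S w0S w1S; rewrite !inE => /andP[z0S g0] /andP[z1S g1] /andP[w0S h0] /andP[w1S h1].
  have hz : getc (pr z0) i = false by rewrite getc_pr.
  have hw : getc (pr w0) i = false by rewrite getc_pr.
  apply: ple_anti.
    case/orP: (chain_cmp hS w0S z1S) => h.
      by move/pr_ple: h; rewrite -e1.
    by move: (getc_ple h); rewrite g1 (negbTE h0).
  case/orP: (chain_cmp hS z0S w1S) => h.
    by move/pr_ple: h; rewrite -e2.
  by move: (getc_ple h); rewrite h1 (negbTE g0).
rewrite c01 -i0 -i1 -cardsUI eS imsetU.
by rewrite -addn1 leq_add2l.
Qed.

Lemma spineP P x : reflect (x \in P /\ exists S, [/\ chain P S, x \in S &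
    forall S', chain P S' -> #|S'| <= #|S|]) (x \in spine P).
Proof.
rewrite /spine inE; apply: (iffP andP) => [[xP /existsP [S /and3P [h1 h2 /forallP h3]]]|[xP [S [h1 h2 h3]]]].
  split => //; exists S; split => // S' hS'; exact: (implyP (h3 S') hS').
split => //; apply/existsP; exists S; rewrite h1 h2 /=.
by apply/forallP => S'; apply/implyP; exact: h3.
Qed.

Lemma step1 : (forall x, x \in spine L -> left_modular_elt L x) ->
  (exists x, x \in Ci /\ x \in spine L) ->
  forall y, y \in spine L' -> left_modular_elt L' y.
Proof.
move=> hsp [x [xC /spineP [xL [S [hS xS hmax]]]]] y /spineP [yL' [S' [hS' yS' hmax']]].
move: xC; rewrite inE => /and3P[_ axx xb].
have hx := hL xL.
have SL := chain_sub hS.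
pose lf s := mk s (~~ ple s x).
pose Sh := lf @: S :|: [set mk x true].
have ShL : chain L' Sh.
  apply: chainP.
    apply/subsetP => z /setUP [/imsetP[s sS ->]|/set1P ->].
      have sL := subsetP SL s sS; rewrite /lf in_double_mk ?hL // sL /=.
      case: (boolP (ple s x)) => /= sx; first exact: ple_trans sx xb.
      case/orP: (chain_cmp hS sS xS) => xs; first by move: sx; rewrite xs.
      by apply: v1_ge; apply: ple_trans axx xs.
    by rewrite in_double_mk // xL /=; exact: v1_ge.
  have cmp s : s \in S -> ple (lf s) (mk x true) || ple (mk x true) (lf s).
    move=> sS; have sL := subsetP SL s sS; rewrite /lf !mk_ple' ?hL //.
    case: (boolP (ple s x)) => sx //=.
    case/orP: (chain_cmp hS sS xS) => xs; first by move: sx; rewrite xs.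
    by rewrite xs.
  move=> z w; rewrite !inE => /orP[/imsetP[s sS ->]|/eqP ->] /orP[/imsetP[t tS ->]|/eqP ->].
  - have sL := subsetP SL s sS; have tL := subsetP SL t tS.
    rewrite /lf !mk_ple' ?hL //.
    case/orP: (chain_cmp hS sS tS) => st; rewrite st /=.
      by apply/orP; left; apply/implyP; apply: contra => tx; apply: ple_trans st tx.
    by apply/orP; right; apply/implyP; apply: contra => sx; apply: ple_trans st sx.
  - exact: cmp.
  - by rewrite orbC; exact: cmp.
  - by rewrite ple_refl.
have cardSh : #|Sh| = #|S|.+1.
  rewrite /Sh setUC cardsU1 card_in_imset; last first.
    move=> s t sS tS /(mk_inj (hL (subsetP SL s sS)) (hL (subsetP SL t tS))) [] //.
  suff -> : mk x true \notin [set lf s | s in S] by rewrite add1n.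
  apply/imsetP => [[s sS e]]; move: (e); move/(mk_inj hx (hL (subsetP SL s sS))) => [es].
  by rewrite -es ple_refl.
have big : #|S|.+1 <= #|S'| by rewrite -cardSh; exact: hmax'.
have hT := pr_chain hS'.
have cT := pr_card hS'.
have leT : #|pr @: S'| <= #|S| by exact: hmax.
have yL := pr_in yL'.
have spy : pr y \in spine L.
  apply/spineP; split => //; exists (pr @: S'); split => //; first by apply/imsetP; exists y.
  move=> S2 /hmax h2; apply: leq_trans h2 _; rewrite -ltnS; exact: leq_trans big cT.
have lmy := hsp _ spy.
rewrite -(mk_pr y); move: yL'; rewrite in_double.
case: (boolP (getc y i)) => gy /andP[_ hy]; last exact: K2a.
apply: K2b => //.
have : ~~ (#|pr @: S'| == #|S'|).
  by rewrite neq_ltn; apply/orP; left; apply: leq_ltn_trans leT big.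
move/imset_injP => ninj.
have [z1 [z2 [z1S z2S e nz]]] : exists z1 z2, [/\ z1 \in S', z2 \in S', pr z1 = pr z2 & z1 != z2].
  apply: NNPP => hne; apply: ninj => z1 z2 h1 h2 e; apply: NNPP => nz; apply: hne.
  by exists z1, z2; split => //; apply/eqP.
have ng : getc z1 i != getc z2 i by apply: contra nz => /eqP g; apply/eqP; exact: pr_inj_lv.
have key zf zt : zf \in S' -> zt \in S' -> pr zf = pr zt -> getc zf i = false -> getc zt i ->
    ple a (pr y).
  move=> zfS ztS ep gf gt.
  have zfL := subsetP (chain_sub hS') _ zfS; have ztL := subsetP (chain_sub hS') _ ztS.
  move: zfL ztL; rewrite !in_double gf gt ep => /andP[_ wb] /andP[_ /implyP /(_ wb) aw].
  case/orP: (chain_cmp hS' zfS yS') => h.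
    by apply: ple_trans aw _; rewrite -ep; exact: pr_ple.
  by move: (getc_ple h); rewrite gy gf.
move: ng; case: (boolP (getc z1 i)) => g1; case: (boolP (getc z2 i)) => g2 //= _.
  by apply: (key z2 z1) => //; apply/negbTE.
by apply: (key z1 z2) => //; apply/negbTE.
Qed.


Lemma step2 (b0 t : pt n) : b0 \in L -> (forall z, z \in L -> ple b0 z) ->
  t \in L -> (forall z, z \in L -> ple z t) ->
  left_modular L' -> left_modular L /\ exists x, x \in Ci /\ x \in spine L.
Proof.
move=> b0L hb0 tL ht [m' [hm' hlm']].
have cm' := proj1 hm'.
have mL' := chain_sub cm'.
have ht0 := hL tL.
have top'L : mk t true \in L' by rewrite in_double_mk // tL /=; apply: v1_ge; exact: ht.
have topm : mk t true \in m'.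
  apply: (maxchain_add hm') => // z zm.
  case/double_inv: (subsetP mL' z zm) => w [g [-> wL _]].
  by rewrite mk_ple' ?hL // ht // implybT.
pose A := [set z in m' | getc z i].
have Am : A \subset m' by apply/subsetP=> z0; rewrite inE => /andP[].
have [y' y'A hy'] : exists2 y', y' \in A & forall w, w \in A -> ple y' w.
  by apply: (chain_min cm' Am); apply/set0Pn; exists (mk t true); rewrite inE topm getc_mk.
move: (y'A); rewrite inE => /andP[y'm gy].
set y := pr y'.
have y'L := subsetP mL' _ y'm.
have yL : y \in L by exact: pr_in.
have hy0 := hL yL.
have ey' : y' = mk y true by rewrite -(mk_pr y') gy.
have ay : ple a y.
  apply: (@K1c y) => //; rewrite -ey' //; exact: hlm'.
have F1 z : z \in m' -> getc z i -> ple y (pr z).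
  by move=> zm gz; apply: pr_ple; apply: hy'; rewrite inE zm.
have F2 z : z \in m' -> getc z i = false -> ple (pr z) y.
  move=> zm gz; case/orP: (chain_cmp cm' zm y'm) => h; first exact: pr_ple.
  by move: (getc_ple h); rewrite gy gz.
have F3 z : z \in m' -> getc z i = false -> ple (pr z) b.
  move=> zm gz; move: (subsetP mL' _ zm); rewrite in_double gz => /andP[].
  by [].
have yb : ple y b.
  set u := pmeet L y b.
  have uL : u \in L by exact: pmeet_in.
  have hu := hL uL.
  have uy : ple u y by exact: pmeet_l.
  have uL' : mk u true \in L'.
    rewrite in_double_mk // uL /=; apply: v1_ge; exact: pmeet_great.
  have um : mk u true \in m'.
    apply: (maxchain_add hm') => // z zm.
    rewrite -(mk_pr z) !mk_ple' ?getc_pr //.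
    case: (boolP (getc z i)) => gz.
      by rewrite (ple_trans uy (F1 z zm gz)) orbT.
    have gz' : getc z i = false by apply/negbTE.
    rewrite /=; apply/orP; left; rewrite andbT; apply: pmeet_great => //.
    - exact: pr_in (subsetP mL' _ zm).
    - exact: F2.
    - exact: F3.
  have : mk u true \in A by rewrite inE um getc_mk.
  move/hy'; rewrite ey' mk_ple' // => /andP[yu _].
  exact: ple_trans yu (pmeet_r latL yL bL).
pose m := pr @: m'.
have cm : chain L m by exact: pr_chain.
have hlm : forall w, w \in m -> left_modular_elt L w.
  move=> w /imsetP [z zm ->].
  have zL' := subsetP mL' _ zm; have zL := pr_in zL'.
  case: (boolP (getc z i)) => gz.
    have ez : mk (pr z) true = z by rewrite -{2}(mk_pr z) gz.
    by apply: K1b => //; rewrite ez //; exact: hlm'.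
  have gz' : getc z i = false by apply/negbTE.
  have ez : mk (pr z) false = z by rewrite -{2}(mk_pr z) gz'.
  by apply: K1a => //; [exact: F3 | rewrite ez; exact: hlm'].
have ym : y \in m by apply/imsetP; exists y'.
have hm : max_chain L m.
  split => // S hS mS; apply/eqP; rewrite eqEsubset mS andbT.
  apply/subsetP => s sS.
  have sL := subsetP (chain_sub hS) _ sS.
  have hs := hL sL.
  set c := ple s b && ~~ ple y s.
  have sL' : mk s (~~ c) \in L'.
    rewrite in_double_mk // sL /= /c /v1.
    case: (boolP (ple s b)) => sb //=; case: (boolP (ple y s)) => ys //=.
    exact: ple_trans ay ys.
  have : mk s (~~ c) \in m'.
    apply: (maxchain_add hm' sL') => z zm.
    have zL := pr_in (subsetP mL' _ zm).
    have cmp : ple s (pr z) || ple (pr z) s.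
      apply: (chain_cmp hS sS); apply: (subsetP mS); apply/imsetP; exists z => //.
    rewrite -(mk_pr z) !mk_ple' ?getc_pr //.
    case: (boolP (getc z i)) => gz.
      have yw := F1 z zm gz.
      rewrite /c; case: (boolP (ple s b)) => sb; case: (boolP (ple y s)) => ys;
        case/orP: cmp => h; rewrite ?h ?andbT ?orbT //=.
      by move: ys; rewrite (ple_trans yw h).
    have gz' : getc z i = false by apply/negbTE.
    have wy := F2 z zm gz'; have wb := F3 z zm gz'.
    rewrite /c; case: (boolP (ple s b)) => sb; case: (boolP (ple y s)) => ys;
      case/orP: cmp => h; rewrite ?h ?andbT ?orbT //=.
    - by rewrite (ple_trans wy ys).
    - by move: sb; rewrite (ple_trans h wb).
    - by move: sb; rewrite (ple_trans h wb).
  move=> sm; have -> : s = pr (mk s (~~ c)) by rewrite pr_mk pr_id.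
  by apply/imsetP; exists (mk s (~~ c)).
split; first by exists m.
exists y; split; first by rewrite inE yL ay yb.
apply/spineP; split => //; exists m; split => // S' hS'.
exact: (K3 latL b0L tL hb0 ht hm hlm hS').
Qed.

End Dbl.
End Enc.


Section Main.
Variable n : nat.
Implicit Types (x y z w : pt n) (P S L : {set pt n}).

Lemma ple_bot z : ple (bot_pt n) z.
Proof. by apply/forallP=> k; rewrite ffunE. Qed.

Lemma getc_bot j : getc (bot_pt n) j = false.
Proof. by apply/existsP => [[k]]; rewrite ffunE andbF. Qed.

Definition Inv L k := [/\ lat L, bot_pt n \in L,
  exists2 t, t \in L & (forall z, z \in L -> ple z t) &
  forall z, z \in L -> forall j, k <= j -> getc z j = false].

Lemma inv_step L i Ci : i < n -> Inv L i -> is_interval L Ci -> Inv (Defs.double L Ci i) i.+1.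
Proof.
move=> Hi [latL botL [t tL ht] hc] [a [b [aL bL ab eC]]]; subst Ci.
have hL z : z \in L -> getc z i = false by move=> zL; exact: hc zL i (leqnn i).
split.
- exact: lat_double.
- have -> : bot_pt n = mk i (bot_pt n) false by rewrite /mk -/(pr i (bot_pt n)) pr_id // hL.
  by rewrite in_double_mk // ?hL // botL ple_bot.
- exists (mk i t true).
    by rewrite in_double_mk // ?hL // tL /=; apply: v1_ge; exact: ht.
  move=> z; rewrite in_double // => /andP[zL _].
  by rewrite -(mk_pr Hi z) (mk_ple' Hi _ _ (getc_pr Hi z) (hL t tL)) (ht _ zL) implybT.
move=> z; rewrite in_double // => /andP[zL _] j ij.
rewrite -(mk_pr Hi z) /mk getc_setc_other //; first exact: hc zL j (ltnW ij).
by rewrite neq_ltn ij orbT.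
Qed.

Variable C : nat -> {set pt n}.
Hypothesis hC : forall i, i < n -> is_interval (Elat C i) (C i).

Lemma lat1 : lat [set bot_pt n].
Proof.
move=> x y; rewrite !inE => /eqP -> /eqP ->; split; exists (bot_pt n).
  apply/and4P; split; rewrite ?inE ?ple_refl //.
  by apply/forall_inP => w _; do 2! apply/implyP => ?.
apply/and4P; split; rewrite ?inE ?ple_refl //.
by apply/forall_inP => w; rewrite inE => /eqP ->; rewrite ple_refl.
Qed.

Lemma inv_all k : k <= n -> Inv (Elat C k) k.
Proof.
elim: k => [_|k IH kn].
  split => /=.
  - exact: lat1.
  - by rewrite inE.
  - by exists (bot_pt n); rewrite ?inE // => z; rewrite inE => /eqP ->; rewrite ple_refl.
  - by move=> z; rewrite inE => /eqP -> j _; rewrite getc_bot.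
exact: inv_step (IH (ltnW kn)) (hC kn).
Qed.

Definition meets i := exists x, x \in C i /\ x \in spine (Elat C i).

Lemma I1 k : k <= n -> (forall i, i < k -> meets i) ->
  forall x, x \in spine (Elat C k) -> left_modular_elt (Elat C k) x.
Proof.
elim: k => [_ _|k IH kn hm].
  move=> x _ b c /=; rewrite !inE => /eqP -> /eqP -> /andP[]; by rewrite eqxx.
have [latL botL [t tL ht] hc] := inv_all (ltnW kn).
have hL z : z \in Elat C k -> getc z k = false by move=> zL; exact: hc zL k (leqnn k).
have [a [b [aL bL ab eC]]] := hC kn.
have IH' := IH (ltnW kn) (fun i ik => hm i (ltnW ik)).
have := hm k (ltnSn k); rewrite /meets eC => mk'.
rewrite /= eC; exact: step1 IH' mk'.
Qed.

Lemma I2 k : k <= n -> left_modular (Elat C k) -> forall i, i < k -> meets i.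
Proof.
elim: k => [_ _ i //|k IH kn hlm].
have [latL botL [t tL ht] hc] := inv_all (ltnW kn).
have hL z : z \in Elat C k -> getc z k = false by move=> zL; exact: hc zL k (leqnn k).
have [a [b [aL bL ab eC]]] := hC kn.
move: hlm; rewrite /= eC => hlm.
have [lmL mk'] := step2 kn aL bL ab hL latL botL (fun z _ => ple_bot z) tL ht hlm.
move=> i; rewrite ltnS leq_eqVlt => /orP[/eqP ->|ik].
  by rewrite /meets eC.
exact: IH (ltnW kn) lmL i ik.
Qed.

End Main.

Theorem corollary3p21 (n : nat) (C : nat -> {set pt n}) :
  (forall i, i < n -> is_interval (Elat C i) (C i)) ->
  (left_modular (Elat C n) <->
   (forall i, i < n -> exists x, x \in C i /\ x \in spine (Elat C i))).
Proof.
move=> hC; split; first by move=> h; exact: (I2 hC (leqnn n) h).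
move=> hm; have hsp := I1 hC (leqnn n) hm.
set L := Elat C n.
have c0 : chain L set0 by apply/andP; split; [exact: sub0set | apply/forall_inP => x; rewrite inE].
case: (@arg_maxnP _ set0 (chain L) (fun S => #|S|) c0) => S hS hmax.
exists S; split.
  split => // S' hS' sub; apply/eqP; rewrite eq_sym eqEcard sub /=; exact: hmax.
move=> x xS; apply: hsp; apply/spineP; split.
  exact: subsetP (chain_sub hS) x xS.
by exists S; split.
Qed.
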